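(* Let $\Omega\subset\mathbb{R}^2$ be an open domain and $z\in C^2(\Omega)$ a solution of $Az_{xx}+2Bz_{xy}+Cz_{yy}+z_{xx}z_{yy}-z_{xy}^2=E$, with $A,B,C,E\in C^2(\mathcal{U})$, $AC-B^2+E>0$ on $\mathcal{U}$, such that the closure of $\{(x,y,z,z_x,z_y)(x,y):(x,y)\in\Omega\}$ is a compact subset of $\mathcal{U}$. Let $\varepsilon\in\{-1,1\}$ be such that $\varepsilon\big((z_{xx}+C)dx^2+2(z_{xy}-B)dxdy+(z_{yy}+A)dy^2\big)$ is positive definite on $\Omega$. Then there exist constants $a,c>0$ such that the function $z^*(x,y)=z(x,y)+\frac{\varepsilon a}{2}x^2+\frac{\varepsilon c}{2}y^2$ has a locally strictly convex graph $\{(x,y,z^*(x,y))\}\subset\mathbb{R}^3$ (i.e. $\varepsilon D^2z^*$ is positive definite on $\Omega$).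
   Context: $\mathcal{U}\subset\mathbb{R}^5$ is open with coordinates $(x,y,z,p,q)$; coefficients are evaluated at $(x,y,z,z_x,z_y)$. The ellipticity $AC-B^2+E>0$ guarantees that the quadratic form above is definite, so such $\varepsilon$ exists (on connected $\Omega$). *)

(* Defs.v *)
From Stdlib Require Import Reals List.
From mathcomp Require Import ssreflect ssrfun ssrbool eqtype ssrnat fintype.
Open Scope R_scope.

Definition vec (n : nat) := 'I_n -> R.

Definition dist_lt {n} (x y : vec n) (d : R) : Prop :=
  forall i, Rabs (x i - y i) < d.

Definition open_in {n} (U : vec n -> Prop) : Prop :=
  forall x, U x -> exists d, 0 < d /\ forall y, dist_lt x y d -> U y.

Definition connected_in {n} (U : vec n -> Prop) : Prop :=
  forall V W : vec n -> Prop, open_in V -> open_in W ->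
    (forall x, U x -> V x \/ W x) ->
    (forall x, U x -> V x -> W x -> False) ->
    (exists x, U x /\ V x) -> (exists x, U x /\ W x) -> False.

Definition domain {n} (U : vec n -> Prop) : Prop :=
  open_in U /\ connected_in U /\ exists x, U x.

Definition closure_in {n} (S : vec n -> Prop) : vec n -> Prop :=
  fun x => forall d, 0 < d -> exists y, S y /\ dist_lt x y d.

Definition compact_in {n} (K : vec n -> Prop) : Prop :=
  forall (I : Type) (O : I -> vec n -> Prop),
    (forall i, open_in (O i)) ->
    (forall x, K x -> exists i, O i x) ->
    exists l : list I, forall x, K x -> exists i, In i l /\ O i x.

Definition continuous_in {n} (U : vec n -> Prop) (f : vec n -> R) : Prop :=
  forall x, U x -> forall eps, 0 < eps -> exists d, 0 < d /\
    forall y, dist_lt x y d -> Rabs (f y - f x) < eps.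

Definition shift {n} (x : vec n) (i : 'I_n) (h : R) : vec n :=
  fun j => if j == i then x j + h else x j.

Definition partial {n} (f : vec n -> R) (i : 'I_n) (x : vec n) (l : R) : Prop :=
  derivable_pt_lim (fun h => f (shift x i h)) 0 l.

Definition C2_on {n} (U : vec n -> Prop) (f : vec n -> R)
    (D1 : 'I_n -> vec n -> R) (D2 : 'I_n -> 'I_n -> vec n -> R) : Prop :=
  open_in U /\
  (forall x, U x -> forall i, partial f i x (D1 i x)) /\
  (forall x, U x -> forall i j, partial (D1 i) j x (D2 i j x)) /\
  continuous_in U f /\
  (forall i, continuous_in U (D1 i)) /\
  (forall i j, continuous_in U (D2 i j)).

Definition is_C2_on {n} (U : vec n -> Prop) (f : vec n -> R) : Prop :=
  exists D1 D2, C2_on U f D1 D2.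

Definition hessian_at {n} (f : vec n -> R) (x : vec n) (H : 'I_n -> 'I_n -> R) : Prop :=
  exists (G : 'I_n -> vec n -> R) (d : R), 0 < d /\
    (forall y, dist_lt x y d -> forall i, partial f i y (G i y)) /\
    (forall i j, partial (G i) j x (H i j)).

Definition ix : 'I_2 := @Ordinal 2 0 erefl.
Definition iy : 'I_2 := @Ordinal 2 1 erefl.

Definition mk5 (a b c d e : R) : vec 5 :=
  fun i => match nat_of_ord i with
           | 0%nat => a | 1%nat => b | 2%nat => c | 3%nat => d | _ => e end.

Definition qform2 (H : 'I_2 -> 'I_2 -> R) (u v : R) : R :=
  H ix ix * u * u + H ix iy * u * v + H iy ix * v * u + H iy iy * v * v.

(* Main.v *)
From Pilot Require Import Defs.
From Stdlib Require Import Reals List Lra Psatz FunctionalExtensionality.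
From mathcomp Require Import ssreflect ssrfun ssrbool eqtype ssrnat fintype.
From Coquelicot Require Import Coquelicot.
Import Pilot.Defs.
Open Scope R_scope.

Lemma ord2 (i : 'I_2) : i = ix \/ i = iy.
Proof. case: i => [[|[|m]] Hm]; [left|right|]; try (apply: val_inj; reflexivity). by []. Qed.

Definition pt (a b : R) : vec 2 := fun j => if j == ix then a else b.

Lemma pt_eta (w : vec 2) : w = pt (w ix) (w iy).
Proof. apply: functional_extensionality => j; case: (ord2 j) => ->; reflexivity. Qed.

Lemma shift_pt_x u v h : shift (pt u v) ix h = pt (u + h) v.
Proof. apply: functional_extensionality => j; case: (ord2 j) => ->; reflexivity. Qed.
Lemma shift_pt_y u v h : shift (pt u v) iy h = pt u (v + h).
Proof. apply: functional_extensionality => j; case: (ord2 j) => ->; reflexivity. Qed.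

Lemma Dx (g : vec 2 -> R) u v l : partial g ix (pt u v) l -> is_derive (fun t => g (pt t v)) u l.
Proof.
  move=> H; apply is_derive_Reals in H.
  have Hc : is_derive (fun t => t - u) u 1 by auto_derive; try ring.
  have Hf : is_derive (fun h => g (shift (pt u v) ix h)) ((fun t => t - u) u) l.
    by replace ((fun t => t - u) u) with 0 by (simpl; ring).
  have := is_derive_comp _ (fun t => t - _) _ _ _ Hf Hc.
  rewrite scal_one. apply: is_derive_ext => t.
  rewrite shift_pt_x; have -> : (u + (t - u) : R) = t by ring. by [].
Qed.
Lemma Dy (g : vec 2 -> R) u v l : partial g iy (pt u v) l -> is_derive (fun t => g (pt u t)) v l.
Proof.
  move=> H; apply is_derive_Reals in H.
  have Hc : is_derive (fun t => t - v) v 1 by auto_derive; try ring.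
  have Hf : is_derive (fun h => g (shift (pt u v) iy h)) ((fun t => t - v) v) l.
    by replace ((fun t => t - v) v) with 0 by (simpl; ring).
  have := is_derive_comp _ (fun t => t - _) _ _ _ Hf Hc.
  rewrite scal_one. apply: is_derive_ext => t.
  rewrite shift_pt_y; have -> : (v + (t - v) : R) = t by ring. by [].
Qed.

Lemma pt_x u v : pt u v ix = u. Proof. reflexivity. Qed.
Lemma pt_y u v : pt u v iy = v. Proof. reflexivity. Qed.

Lemma tri p q r e1 e2 : Rabs (p - r) < e1 -> Rabs (r - q) < e2 -> Rabs (p - q) < e1 + e2.
Proof. move=> H1 H2. split_Rabs; lra. Qed.

Lemma open_box (Omega : vec 2 -> Prop) w : open_in Omega -> Omega w ->
  exists d, 0 < d /\ forall u v, Rabs (u - w ix) < d -> Rabs (v - w iy) < d -> Omega (pt u v).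
Proof.
 move=> Ho Hw; case: (Ho w Hw) => d [Hd Hd']; exists d; split => // u v Hu Hv.
 apply: Hd' => j; case: (ord2 j) => ->; rewrite ?pt_x ?pt_y Rabs_minus_sym //.
Qed.

Lemma ballR a e s : ball a e s -> Rabs (s - a) < e.
Proof. rewrite /ball /= /AbsRing_ball /= /abs /minus /plus /opp /=. done. Qed.

Lemma hess_sym Omega z Dz D2z : C2_on Omega z Dz D2z -> forall w, Omega w -> D2z ix iy w = D2z iy ix w.
Proof.
 move=> [Ho [H1 [H2 [_ [_ Hc2]]]]] w Hw.
 case: (open_box _ _ Ho Hw) => d [Hd Hbox].
 set f := fun a b => z (pt a b).
 have Dfx : forall a b, Rabs (a - w ix) < d -> Rabs (b - w iy) < d -> is_derive (fun t => f t b) a (Dz ix (pt a b)).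
   move=> a b Ha Hb; apply: Dx; exact: H1 (Hbox _ _ Ha Hb) ix.
 have Dfy : forall a b, Rabs (a - w ix) < d -> Rabs (b - w iy) < d -> is_derive (fun t => f a t) b (Dz iy (pt a b)).
   move=> a b Ha Hb; apply: Dy; exact: H1 (Hbox _ _ Ha Hb) iy.
 have Hd2 : 0 < d / 2 by lra.
 have E1 : forall a b, Rabs (a - w ix) < d/2 -> Rabs (b - w iy) < d/2 ->
    is_derive (fun s => Derive (fun t => f s t) b) a (D2z iy ix (pt a b)).
   move=> a b Ha Hb. apply: (is_derive_ext_loc (fun s => Dz iy (pt s b))).
   - exists (mkposreal _ Hd2) => s /ballR /= Hs. symmetry; apply: is_derive_unique.
     apply: Dfy; [| lra]. have := tri _ _ _ _ _ Hs Ha. lra.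
   - apply: Dx; have Ha1 : Rabs (a - w ix) < d by lra. have Hb1 : Rabs (b - w iy) < d by lra. exact: H2 (Hbox _ _ Ha1 Hb1) iy ix.
 have E2 : forall a b, Rabs (a - w ix) < d/2 -> Rabs (b - w iy) < d/2 ->
    is_derive (fun s => Derive (fun t => f t s) a) b (D2z ix iy (pt a b)).
   move=> a b Ha Hb. apply: (is_derive_ext_loc (fun s => Dz ix (pt a s))).
   - exists (mkposreal _ Hd2) => s /ballR /= Hs. symmetry; apply: is_derive_unique.
     apply: Dfx; [lra |]. have := tri _ _ _ _ _ Hs Hb. lra.
   - apply: Dy; have Ha1 : Rabs (a - w ix) < d by lra. have Hb1 : Rabs (b - w iy) < d by lra. exact: H2 (Hbox _ _ Ha1 Hb1) ix iy.
 have Hx0 : Rabs (w ix - w ix) < d/2 by rewrite Rminus_eq_0 Rabs_R0.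
 have Hy0 : Rabs (w iy - w iy) < d/2 by rewrite Rminus_eq_0 Rabs_R0.
 have := Schwarz f (w ix) (w iy).
 rewrite (is_derive_unique _ _ _ (E1 _ _ Hx0 Hy0)) (is_derive_unique _ _ _ (E2 _ _ Hx0 Hy0)) -pt_eta.
 move=> ->; first by [].
 - exists (mkposreal _ Hd2) => u v /= Hu Hv; split; [|split; [|split]]; eexists.
   + apply: Dfx; lra. + apply: Dfy; lra. + exact: E1. + exact: E2.
 - move=> [e He]. case: (Hc2 iy ix w Hw e He) => d1 [Hd1 Hc].
   have Hm : 0 < Rmin (d/2) d1 by apply: Rmin_pos.
   exists (mkposreal _ Hm) => u v /= Hu Hv.
   have Hu1 := Rlt_le_trans _ _ _ Hu (Rmin_l _ _). have Hu2 := Rlt_le_trans _ _ _ Hu (Rmin_r _ _).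
   have Hv1 := Rlt_le_trans _ _ _ Hv (Rmin_l _ _). have Hv2 := Rlt_le_trans _ _ _ Hv (Rmin_r _ _).
   rewrite (is_derive_unique _ _ _ (E1 _ _ Hu1 Hv1)) (is_derive_unique _ _ _ (E1 _ _ Hx0 Hy0)) -pt_eta.
   apply: Hc => j; case: (ord2 j) => ->; rewrite ?pt_x ?pt_y Rabs_minus_sym //.
 - move=> [e He]. case: (Hc2 ix iy w Hw e He) => d1 [Hd1 Hc].
   have Hm : 0 < Rmin (d/2) d1 by apply: Rmin_pos.
   exists (mkposreal _ Hm) => u v /= Hu Hv.
   have Hu1 := Rlt_le_trans _ _ _ Hu (Rmin_l _ _). have Hu2 := Rlt_le_trans _ _ _ Hu (Rmin_r _ _).
   have Hv1 := Rlt_le_trans _ _ _ Hv (Rmin_l _ _). have Hv2 := Rlt_le_trans _ _ _ Hv (Rmin_r _ _).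
   rewrite (is_derive_unique _ _ _ (E2 _ _ Hu1 Hv1)) (is_derive_unique _ _ _ (E2 _ _ Hx0 Hy0)) -pt_eta.
   apply: Hc => j; case: (ord2 j) => ->; rewrite ?pt_x ?pt_y Rabs_minus_sym //.
Qed.

Ltac req := match goal with |- ?x = ?y => let E := fresh in assert (E : (x:R) = (y:R)) by (field || ring); exact E end.

Lemma dplus (f g : R -> R) x lf lg l : is_derive f x lf -> is_derive g x lg -> l = lf + lg ->
  is_derive (fun h => f h + g h) x l.
Proof. move=> Hf Hg ->; exact: is_derive_plus Hf Hg. Qed.

Lemma fold_ge0 l : 0 <= fold_right (fun k acc => Rmax (INR k) acc) 0 l.
Proof. elim: l => [|a l IH] /=; [lra | apply: Rle_trans IH (Rmax_r _ _)]. Qed.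
Lemma fold_in l k : In k l -> INR k <= fold_right (fun k acc => Rmax (INR k) acc) 0 l.
Proof. elim: l => [|a l IH] //= [->|H]; [apply Rmax_l | apply: Rle_trans (IH H) (Rmax_r _ _)]. Qed.

Lemma bound_compact n (K U : vec n -> Prop) (f : vec n -> R) :
  continuous_in U f -> compact_in K -> (forall P, K P -> U P) ->
  exists M, 0 <= M /\ forall P, K P -> Rabs (f P) <= M.
Proof.
 move=> Hf HK HKU.
 pose O := fun (k : nat) (P : vec n) => exists d, 0 < d /\ forall Q, dist_lt P Q d -> Rabs (f Q) < INR k.
 case: (HK nat O).
 - move=> k P [d [Hd HP]]. exists (d/2); split; first lra.
   move=> P' HP'. exists (d/2); split; first lra. move=> Q HQ. apply: HP => i.
   have := tri _ _ _ _ _ (HP' i) (HQ i). lra.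
 - move=> P HP. case: (Hf P (HKU P HP) 1 Rlt_0_1) => d [Hd Hc].
   case: (INR_archimed 1 (Rabs (f P) + 1) Rlt_0_1) => k Hk.
   exists k, d; split => // Q HQ. have := Hc Q HQ. move: Hk. rewrite Rmult_1_r. split_Rabs; lra.
 - move=> l Hl. exists (fold_right (fun k acc => Rmax (INR k) acc) 0 l).
   split; first exact: fold_ge0.
   move=> P HP. case: (Hl P HP) => k [Hin [d [Hd H]]].
   have : Rabs (f P) < INR k by apply: H => i; rewrite Rminus_eq_0 Rabs_R0.
   have := fold_in l k Hin; lra.
Qed.
Theorem mainTheorem7
  (Omega : vec 2 -> Prop) (U : vec 5 -> Prop)
  (A B C E : vec 5 -> R)
  (z : vec 2 -> R) (Dz : 'I_2 -> vec 2 -> R) (D2z : 'I_2 -> 'I_2 -> vec 2 -> R)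
  (eps : R) :
  domain Omega ->
  open_in U ->
  is_C2_on U A -> is_C2_on U B -> is_C2_on U C -> is_C2_on U E ->
  (forall P, U P -> A P * C P - B P ^ 2 + E P > 0) ->
  C2_on Omega z Dz D2z ->
  let jet := fun w : vec 2 => mk5 (w ix) (w iy) (z w) (Dz ix w) (Dz iy w) in
  (* z solves the PDE on Omega *)
  (forall w, Omega w ->
     A (jet w) * D2z ix ix w + 2 * B (jet w) * D2z ix iy w + C (jet w) * D2z iy iy w
     + D2z ix ix w * D2z iy iy w - (D2z ix iy w) ^ 2 = E (jet w)) ->
  (* closure_in of the 1-jet image is a compact subset of U *)
  (let S := fun P : vec 5 => exists w, Omega w /\ forall i, P i = jet w i in
   compact_in (closure_in S) /\ (forall P, closure_in S P -> U P)) ->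
  (eps = 1 \/ eps = -1) ->
  (forall w, Omega w -> forall u v : R, (u <> 0 \/ v <> 0) ->
     eps * ((D2z ix ix w + C (jet w)) * u ^ 2
            + 2 * (D2z ix iy w - B (jet w)) * u * v
            + (D2z iy iy w + A (jet w)) * v ^ 2) > 0) ->
  exists a c : R, 0 < a /\ 0 < c /\
    let zs := fun w : vec 2 => z w + eps * a / 2 * (w ix) ^ 2 + eps * c / 2 * (w iy) ^ 2 in
    forall w, Omega w -> exists H, hessian_at zs w H /\
      forall u v : R, (u <> 0 \/ v <> 0) -> eps * qform2 H u v > 0.
Proof.
 move=> Hdom HU HA HB HC _ _ Hz jet _ [Hcomp Hsub] Heps Hpos.
 case: HA => DA [D2A [_ [_ [_ [HAc _]]]]].
 case: HB => DB [D2B [_ [_ [_ [HBc _]]]]].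
 case: HC => DC [D2C [_ [_ [_ [HCc _]]]]].
 have HSc : forall w, Omega w -> closure_in (fun P : vec 5 => exists w, Omega w /\ forall i, P i = jet w i) (jet w).
   move=> w Hw d Hd. exists (jet w); split; [exists w; split => // | move=> i; rewrite Rminus_eq_0 Rabs_R0 //].
 case: (bound_compact _ _ U A HAc Hcomp Hsub) => MA [MA0 HMA].
 case: (bound_compact _ _ U B HBc Hcomp Hsub) => MB [MB0 HMB].
 case: (bound_compact _ _ U C HCc Hcomp Hsub) => MC [MC0 HMC].
 pose M := MA + MB + MC. pose a := 2 * M + 1.
 have Ha : 0 < a by rewrite /a /M; lra.
 exists a, a; split => //; split => //.
 move=> zs w Hw.
 have Hsym := hess_sym _ _ _ _ Hz w Hw.
 case: Hdom => Ho _. case: (Ho w Hw) => d [Hd Hball].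
 have Hyx : (iy == ix) = false by [].
 exists (fun i j => D2z i j w + (if i == ix then (if j == ix then eps*a else 0) else (if j == ix then 0 else eps*a))).
 split.
 - exists (fun i y => Dz i y + eps * a * y i), d. split => //. split.
   + move=> y Hy i. have Oy := Hball y Hy. apply/is_derive_Reals.
     have Hzd := proj2 (is_derive_Reals _ _ _) ((proj1 (proj2 Hz)) y Oy i).
     case: (ord2 i) => Ei; rewrite Ei in Hzd *.
     * apply: (is_derive_ext (fun h => z (shift y ix h) + (eps*a/2*(y ix + h)^2 + eps*a/2*(y iy)^2))).
         move=> h. rewrite /zs. have -> : shift y ix h ix = y ix + h by []. have -> : shift y ix h iy = y iy by []. by rewrite Rplus_assoc.
       apply: dplus Hzd _ _; last reflexivity. auto_derive; first done. req.
     * apply: (is_derive_ext (fun h => z (shift y iy h) + (eps*a/2*(y ix)^2 + eps*a/2*(y iy + h)^2))).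
         move=> h. rewrite /zs. have -> : shift y iy h ix = y ix by []. have -> : shift y iy h iy = y iy + h by []. by rewrite Rplus_assoc.
       apply: dplus Hzd _ _; last reflexivity. auto_derive; first done. req.
   + move=> i j. apply/is_derive_Reals.
     have Hzd := proj2 (is_derive_Reals _ _ _) ((proj1 (proj2 (proj2 Hz))) w Hw i j).
     case: (ord2 i) => Ei; case: (ord2 j) => Ej; rewrite Ei Ej in Hzd *; rewrite ?eqxx ?Hyx.
     * apply: (is_derive_ext (fun h => Dz ix (shift w ix h) + eps * a * (w ix + h))). by move=> h.
       apply: dplus Hzd _ _; last reflexivity. auto_derive; first done. req.
     * apply: (is_derive_ext (fun h => Dz ix (shift w iy h) + eps * a * (w ix))). by move=> h.
       apply: dplus Hzd (is_derive_const _ _) _. rewrite /zero /=. req.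
     * apply: (is_derive_ext (fun h => Dz iy (shift w ix h) + eps * a * (w iy))). by move=> h.
       apply: dplus Hzd (is_derive_const _ _) _. rewrite /zero /=. req.
     * apply: (is_derive_ext (fun h => Dz iy (shift w iy h) + eps * a * (w iy + h))). by move=> h.
       apply: dplus Hzd _ _; last reflexivity. auto_derive; first done. req.
 - move=> u v Huv. rewrite /qform2 !eqxx Hyx.
   have Hold := Hpos w Hw u v Huv.
   have := HMA _ (HSc w Hw). have := HMB _ (HSc w Hw). have := HMC _ (HSc w Hw).
   move: Hold. rewrite Hsym /a /M.
   set Aj := A (jet w). set Bj := B (jet w). set Cj := C (jet w).
   move=> Hold HC1 HB1 HA1.
   have [HA2 HA3] : -MA <= Aj <= MA by split_Rabs; lra.
   have [HB2 HB3] : -MB <= Bj <= MB by split_Rabs; lra.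
   have [HC2 HC3] : -MC <= Cj <= MC by split_Rabs; lra.
   have F1 : 0 <= (MA+MB+MC + Bj) * (u+v)^2 by apply: Rmult_le_pos; [lra | apply: pow2_ge_0].
   have F2 : 0 <= (MA+MB+MC - Bj) * (u-v)^2 by apply: Rmult_le_pos; [lra | apply: pow2_ge_0].
   have F3 : 0 <= (MA+MB+MC + Bj) * (u-v)^2 by apply: Rmult_le_pos; [lra | apply: pow2_ge_0].
   have F4 : 0 <= (MA+MB+MC - Bj) * (u+v)^2 by apply: Rmult_le_pos; [lra | apply: pow2_ge_0].
   have F5 : 0 <= (MA+MB+MC + 1 - Cj) * u^2 by apply: Rmult_le_pos; [lra | apply: pow2_ge_0].
   have F6 : 0 <= (MA+MB+MC + 1 + Cj) * u^2 by apply: Rmult_le_pos; [lra | apply: pow2_ge_0].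
   have F7 : 0 <= (MA+MB+MC + 1 - Aj) * v^2 by apply: Rmult_le_pos; [lra | apply: pow2_ge_0].
   have F8 : 0 <= (MA+MB+MC + 1 + Aj) * v^2 by apply: Rmult_le_pos; [lra | apply: pow2_ge_0].
   case: Heps => Ee; rewrite Ee in Hold *; nra.
Qed.
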